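(* Let $n\ge 3$ and let $K_n$ be the complete graph on $n$ vertices. Then the distance eigenvalues of $K_n\otimes K_n$ are $(n-1)(n+3)$, $n-3$, $-3$ with multiplicities $1$, $2n-2$, $(n-1)^2$ respectively.
   Context: The Kronecker product $G\otimes H$ of simple graphs $G,H$ has vertex set $V(G)\times V(H)$, with $(x,y)$ adjacent to $(u,v)$ if and only if $xu\in E(G)$ and $yv\in E(H)$. Distance eigenvalues are the eigenvalues of the distance matrix, whose $(u,v)$ entry is the length of a shortest $u$–$v$ path. *)

(* Defs.v *)
From HB Require Import structures.
From mathcomp Require Import all_boot all_order all_algebra.
Set Implicit Arguments. Unset Strict Implicit. Unset Printing Implicit Defensive.
Import Order.TTheory GRing.Theory Num.Theory.

Definition complete_graph (n : nat) : rel 'I_n := fun x y => x != y.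
Arguments complete_graph n : clear implicits.

Definition kron_graph (T U : finType) (eG : rel T) (eH : rel U) : rel (T * U) :=
  fun p q => eG p.1 q.1 && eH p.2 q.2.

Fixpoint walkb (T : finType) (e : rel T) (k : nat) (x y : T) : bool :=
  match k with
  | 0 => x == y
  | k'.+1 => [exists z, e x z && walkb e k' z y]
  end.

(* A shortest walk is a path, hence has length
   < #|T| when it exists; if x, y are in different components the value is
   #|T| (a convention irrelevant for connected graphs). *)
Definition gdist (T : finType) (e : rel T) (x y : T) : nat :=
  find (fun k => walkb e k x y) (iota 0 #|T|).

Definition dist_matrix (R : nzRingType) (T : finType) (e : rel T) : 'M[R]_#|T| :=
  \matrix_(i, j) ((gdist e (enum_val i) (enum_val j))%:R)%R.

(* Main.v *)
Require Import Defs.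
From HB Require Import structures.
From mathcomp Require Import all_boot all_order all_algebra.
From mathcomp Require Import ring zify.
Import Order.TTheory GRing.Theory Num.Theory.
Local Open Scope ring_scope.

Definition mxT {R : nzRingType} {T : finType} (f : T -> T -> R) : 'M[R]_#|T| :=
  \matrix_(i, j) f (enum_val i) (enum_val j).

Lemma mulmxT (R : nzRingType) (T : finType) (f g : T -> T -> R) :
  mxT f *m mxT g = mxT (fun x y => \sum_t f x t * g t y).
Proof.
apply/matrixP => i j; rewrite !mxE.
rewrite (big_enum_val (fun t => f (enum_val i) t * g t (enum_val j))) /=.
by apply: eq_bigr => k _; rewrite !mxE.
Qed.

Lemma char_poly_conj (R : comNzRingType) m (A P P' : 'M[R]_m) :
  P' *m P = 1%:M -> char_poly (P' *m A *m P) = char_poly A.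
Proof.
move=> PP.
have hm : forall B C : 'M[R]_m, map_mx polyC (B *m C) = map_mx polyC B *m map_mx polyC C.
  by move=> B C; rewrite map_mxM.
have E : char_poly_mx (P' *m A *m P) = map_mx polyC P' *m char_poly_mx A *m map_mx polyC P.
  rewrite /char_poly_mx mulmxBr mulmxBl !hm; congr (_ - _).
  by rewrite mul_mx_scalar -scalemxAl -hm PP map_mx1 scalemx1.
by rewrite /char_poly E !det_mulmx mulrC mulrA -det_mulmx -hm mulmx1C // map_mx1 det1 mul1r.
Qed.

Lemma sum_delta {R : nzRingType} {T : finType} (F : T -> R) (y : T) :
  \sum_t F t * (t == y)%:R = F y.
Proof.
rewrite (bigD1 y) //= eqxx mulr1 big1 ?addr0 // => t /negPf ->; by rewrite mulr0.
Qed.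

Lemma sum_delta' {R : nzRingType} {T : finType} (F : T -> R) (y : T) :
  \sum_t (t == y)%:R * F t = F y.
Proof.
rewrite (bigD1 y) //= eqxx mul1r big1 ?addr0 // => t /negPf ->; by rewrite mul0r.
Qed.

Section K.
Variable R : realFieldType.
Variable m : nat.
Local Notation N := m.+1.
Local Notation I := 'I_N.

Definition Q (i j : I) : R := if j == ord0 then 1 else (i == j)%:R - (i == ord0)%:R.
Definition Q' (i j : I) : R := if i == ord0 then N%:R^-1 else (i == j)%:R - N%:R^-1.
Definition Dg (j : I) : R := if j == ord0 then N%:R else 0.

Lemma sum_ind (j : I) : \sum_(k : I) (k == j)%:R = 1 :> R.
Proof. rewrite -[RHS](sum_delta (fun _ : I => 1 : R) j); apply: eq_bigr => k _; by rewrite mul1r. Qed.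

Lemma L_col (x j : I) : \sum_k Q k j = Q x j * Dg j.
Proof.
rewrite /Q /Dg; case: (j == ord0).
  by rewrite sumr_const card_ord mul1r.
by rewrite sumrB !sum_ind subrr mulr0.
Qed.

Lemma Nne0 : N%:R != 0 :> R.
Proof. by rewrite pnatr_eq0. Qed.

Lemma L_inv (i j : I) : \sum_k Q' i k * Q k j = (i == j)%:R.
Proof.
rewrite /Q'; case: eqP => [->|/eqP hi].
  rewrite -mulr_sumr (L_col ord0) /Q /Dg; case: eqP => [<-|/eqP hj].
    by rewrite eqxx mul1r mulVf ?Nne0.
  by rewrite !mulr0 eq_sym (negPf hj).
under eq_bigr => k _ do rewrite mulrBl.
rewrite sumrB -mulr_sumr (L_col i).
rewrite (eq_bigr (fun k => Q k j * (k == i)%:R)); last first.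
  by move=> k _; rewrite mulrC eq_sym.
rewrite sum_delta /Q /Dg; case: eqP => [->|_].
  by rewrite mul1r mulVf ?Nne0 // subrr (negPf hi).
by rewrite !mulr0 subr0 (negPf hi) subr0.
Qed.


Local Notation T := (I * I)%type.

Definition P (x y : T) : R := Q x.1 y.1 * Q x.2 y.2.
Definition P' (x y : T) : R := Q' x.1 y.1 * Q' x.2 y.2.
Definition lam (y : T) : R := Dg y.1 * Dg y.2 + Dg y.1 + Dg y.2 - 3.
Definition dd (x y : T) : R :=
  1 + (x.1 == y.1)%:R + (x.2 == y.2)%:R - 3 * ((x.1 == y.1)%:R * (x.2 == y.2)%:R).

Lemma sumT (F : T -> R) : \sum_t F t = \sum_a \sum_b F (a, b).
Proof. by rewrite pair_big; apply: eq_bigr => -[a b]. Qed.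

Lemma C1 (x y : T) : \sum_t P' x t * P t y = (x == y)%:R.
Proof.
rewrite sumT.
rewrite (eq_bigr (fun a => \sum_b (Q' x.1 a * Q a y.1) * (Q' x.2 b * Q b y.2))); last first.
  by move=> a _; apply: eq_bigr => b _; rewrite /P /P' /=; ring.
rewrite -big_distrlr /= !L_inv.
case: x y => [x1 x2] [y1 y2] /=; rewrite xpair_eqE.
by case: (x1 == y1); case: (x2 == y2); rewrite /= ?mulr1 ?mulr0.
Qed.

Lemma sum4 (F1 F2 G1 G2 : I -> R) :
  \sum_a \sum_b (F1 a * G1 b + F2 a * G1 b + F1 a * G2 b - 3 * (F2 a * G2 b)) =
  (\sum_a F1 a) * (\sum_b G1 b) + (\sum_a F2 a) * (\sum_b G1 b)
  + (\sum_a F1 a) * (\sum_b G2 b) - 3 * ((\sum_a F2 a) * (\sum_b G2 b)).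
Proof.
under eq_bigr => a _ do rewrite sumrB !big_split /= -!mulr_sumr.
rewrite sumrB !big_split /= -!mulr_suml -!mulr_sumr -!mulr_suml.
done.
Qed.

Lemma C2 (x y : T) : \sum_t dd x t * P t y = P x y * lam y.
Proof.
rewrite sumT.
rewrite (eq_bigr (fun a => \sum_b (Q a y.1 * Q b y.2 + ((a == x.1)%:R * Q a y.1) * Q b y.2
   + Q a y.1 * ((b == x.2)%:R * Q b y.2) - 3 * (((a == x.1)%:R * Q a y.1) * ((b == x.2)%:R * Q b y.2))))); last first.
  move=> a _; apply: eq_bigr => b _; rewrite /dd /P /= [x.1 == a]eq_sym [x.2 == b]eq_sym; ring.
rewrite sum4 !sum_delta' (L_col x.1 y.1) (L_col x.2 y.2) /P /lam; ring.
Qed.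


Lemma ex_diff (hm : (2 <= m)%N) (u v : I) : exists a : I, (u != a) && (v != a).
Proof.
case: (pickP (fun a : I => (u != a) && (v != a))) => [a ha|h]; first by exists a.
exfalso.
have : (#|'I_N| <= #|[set u; v]|)%N.
  apply: subset_leq_card; apply/subsetP => a _; move: (h a); rewrite !inE.
  by rewrite !(eq_sym a); case: (u == a); case: (v == a).
rewrite card_ord cards2; case: (u != v) => /=; lia.
Qed.

Lemma gdist_val (hm : (2 <= m)%N) (x y : T) :
  (gdist (kron_graph (complete_graph N) (complete_graph N)) x y)%:R = dd x y.
Proof.
have cardT : #|{: T}| = (N * N - 3).+3 by rewrite card_prod card_ord; lia.
rewrite /gdist cardT /=.
set e := kron_graph _ _.
have w1 : forall u v : T, [exists z, e u z && (z == v)] = e u v.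
  move=> u v; apply/existsP/idP => [[z /andP[h /eqP <-]]//|h].
  by exists v; rewrite h eqxx.
have w2 : forall u v : T, [exists z, e u z && [exists z0, e z z0 && (z0 == v)]]
    = [exists z, e u z && e z v].
  by move=> u v; apply: eq_existsb => z; rewrite w1.
rewrite w2 w1.
have w3 : [exists z, e x z && e z y].
  have [a /andP[ha1 ha2]] := ex_diff hm x.1 y.1.
  have [b /andP[hb1 hb2]] := ex_diff hm x.2 y.2.
  apply/existsP; exists (a, b).
  by rewrite /e /kron_graph /complete_graph /= ha1 hb1 eq_sym ha2 eq_sym hb2.
rewrite w3.
case: x y w3 => [x1 x2] [y1 y2] _.
rewrite /e /kron_graph /complete_graph /dd /= xpair_eqE.
by case: (x1 == y1); case: (x2 == y2); rewrite /=; ring.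
Qed.

End K.

Lemma prodT (R : comNzRingType) m (F : ('I_m.+1 * 'I_m.+1)%type -> R) :
  \prod_t F t = \prod_a \prod_b F (a, b).
Proof. by rewrite pair_big; apply: eq_bigr => -[a b]. Qed.

Lemma prod_split (S : comNzRingType) m (F : 'I_m.+1 -> S) c :
  (forall a, a != ord0 -> F a = c) -> \prod_a F a = F ord0 * c ^+ m.
Proof.
move=> h; rewrite (bigD1 ord0) //= (eq_bigr (fun _ => c)) ?prodr_const ?cardC1 ?card_ord //.
Qed.

Theorem corollary4p5 (R : realFieldType) (n : nat) (hn : (3 <= n)%N) :
  char_poly (dist_matrix R (kron_graph (complete_graph n) (complete_graph n)))
  = ('X - (((n - 1) * (n + 3))%N)%:R%:P)
    * ('X - (n%:R - 3)%:P) ^+ (2 * n - 2)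
    * ('X - (-3)%:P) ^+ ((n - 1) ^ 2).
Proof.
case: n hn => [//|m] hn.
have hm : (2 <= m)%N by [].
set D := dist_matrix _ _.
have HD : D = mxT (@dd R m).
  by apply/matrixP => i j; rewrite !mxE gdist_val.
set PP := mxT (@P R m); set PP' := mxT (@P' R m).
pose L : 'M[R]_#|{: ('I_m.+1 * 'I_m.+1)%type}| := diag_mx (\row_i (@lam R m (enum_val i))).
have HL : L = mxT (fun x y => (x == y)%:R * @lam R m y).
  apply/matrixP => i j; rewrite !mxE (inj_eq enum_val_inj).
  by case: eqP => [->|_]; rewrite ?mulr1n ?mul1r ?mulr0n ?mul0r.
have h1 : PP' *m PP = 1%:M.
  by apply/matrixP => i j; rewrite mulmxT !mxE C1 (inj_eq enum_val_inj).
have h2 : D *m PP = PP *m L.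
  rewrite HD HL !mulmxT; apply/matrixP => i j; rewrite !mxE C2.
  rewrite (bigD1 (enum_val j)) //= eqxx mul1r big1 ?addr0 // => t /negPf ->.
  by rewrite mul0r mulr0.
have h3 : PP' *m D *m PP = L by rewrite -mulmxA h2 mulmxA h1 mul1mx.
rewrite -(@char_poly_conj _ _ D _ _ h1) h3 char_poly_trig ?diag_mx_is_trig //.
rewrite (eq_bigr (fun i => 'X - (@lam R m (enum_val i))%:P)); last first.
  by move=> i _; rewrite !mxE eqxx mulr1n.
rewrite -(big_enum_val (fun t => 'X - (@lam R m t)%:P)) /= prodT.
clear.
have inner : forall a, \prod_b ('X - (lam R m (a,b))%:P)
   = ('X - (lam R m (a, ord0))%:P) * ('X - (Dg R m a - 3)%:P) ^+ m.
  move=> a; apply: prod_split => b /negPf hb.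
  by rewrite /lam /= [Dg R m b]/Dg hb mulr0 add0r addr0.
rewrite (@prod_split _ _ _ (('X - (m.+1%:R - 3)%:P) * ('X - (-3)%:P) ^+ m)); last first.
  move=> a /negPf ha; rewrite inner /lam /= /Dg ha eqxx mul0r add0r sub0r add0r.
  done.
rewrite inner /lam /Dg /=.
have -> : (m.+1 - 1 = m)%N by rewrite subn1.
have -> : (2 * m.+1 - 2 = m + m)%N by lia.
have -> : ((m * (m.+1 + 3))%:R : R) = m.+1%:R * m.+1%:R + m.+1%:R + m.+1%:R - 3.
  rewrite natrM natrD -addn1 !natrD; ring.
by rewrite exprMn -exprM exprD !mulrA.
Qed.
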